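(* In the setting of the context, with step sizes $\alpha_k=\frac{a}{b+k}$ where $a>0$, $b>1$ and $\frac ab\le\frac1{2M\tilde L}$, for every $n\ge0$ and $0\le k\le n$, $$B_k\le\frac{a^2M\tilde Lc(A)\sigma_{\max}^2}{b+k-1}\Big(\frac{b+k+1}{b+n+1}\Big)^{a\sigma_{\min}^2}.$$
   Context: Standing setting: $M\ge N$, $A\in\mathbb{R}^{M\times N}$ of full column rank with rows $a_1,\dots,a_M$; singular values $\sigma_1\ge\dots\ge\sigma_N>0$, $\sigma_{\max}=\sigma_1$, $\sigma_{\min}=\sigma_N$, $c(A)=\sigma_{\max}^2/\sigma_{\min}^2$, $\tilde L=\max_i\|a_i\|^2$. Fix $\ell\in\{1,\dots,N\}$. For $\alpha>0$ put $A(\alpha)=1-2\alpha\sigma_\ell^2$, $B(\alpha)=\alpha^2M\tilde Lc(A)\sigma_{\max}^2$, $p(\alpha)=1-\alpha\sigma_{\min}^2$. For fixed $n$ and $0\le k\le n$: $B_k=\sum_{j=k}^n\Big(\prod_{i=j+1}^nA(\alpha_i)\Big)B(\alpha_j)\Big(\prod_{i=k}^{j-1}p(\alpha_i)\Big)$ (empty products equal $1$). (The scalars $a,b$ in the step size are unrelated to the rows $a_i$.) *)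

(* Defs.v *)
From HB Require Import structures.
From mathcomp Require Import all_boot all_order all_algebra.
From mathcomp Require Import all_classical all_reals all_analysis.
Set Implicit Arguments. Unset Strict Implicit. Unset Printing Implicit Defensive.
Import Order.TTheory GRing.Theory Num.Theory.
Local Open Scope ring_scope.

Section Defs.
Variable R : realType.

Definition smax (N : nat) (s : 'I_N -> R) : R := \big[Num.max/0]_(i < N) s i.
Definition smin (N : nat) (s : 'I_N -> R) : R := \big[Num.min/smax s]_(i < N) s i.

Definition condA (N : nat) (s : 'I_N -> R) : R := smax s ^+ 2 / smin s ^+ 2.

Definition Ltilde (M N : nat) (A : 'M[R]_(M, N)) : R :=
  \big[Num.max/0]_(i < M) \sum_(j < N) A i j ^+ 2.

Definition Afac (sl al : R) : R := 1 - 2 * al * sl ^+ 2.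
Definition Bfac (Mr Lt c smx al : R) : R := al ^+ 2 * Mr * Lt * c * smx ^+ 2.
Definition pfac (smn al : R) : R := 1 - al * smn ^+ 2.

Definition Bk (sl Mr Lt c smx smn : R) (alpha : nat -> R) (n k : nat) : R :=
  \sum_(k <= j < n.+1)
    (\prod_(j.+1 <= i < n.+1) Afac sl (alpha i)) * Bfac Mr Lt c smx (alpha j)
    * (\prod_(k <= i < j) pfac smn (alpha i)).

End Defs.

(* Main.v *)
Require Import Defs.
From HB Require Import structures.
From mathcomp Require Import all_boot all_order all_algebra.
From mathcomp Require Import all_classical all_reals all_analysis.
From mathcomp Require Import ring lra.
Import Order.TTheory GRing.Theory Num.Theory.
Local Open Scope ring_scope.

Lemma sq_tele (R : realFieldType) (x : R) : 1 < x -> 1 / x ^+ 2 <= 1 / (x - 1) - 1 / x.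
Proof.
move=> hx.
have -> : 1 / (x - 1) - 1 / x = 1 / ((x - 1) * x).
  by field; apply/andP; split; apply/eqP; lra.
rewrite !div1r ler_pV2 ?inE ?unitfE; last first.
- by apply/andP; split; [apply/eqP; nra | nra].
- by apply/andP; split; [apply/eqP; nra | nra].
nra.
Qed.

Lemma sum_bound (R : realFieldType) (b : R) (k n : nat) : 1 < b -> (k <= n)%N ->
  \sum_(k <= j < n.+1) 1 / (b + j%:R) ^+ 2 <= 1 / (b + k%:R - 1) - 1 / (b + n%:R).
Proof.
move=> hb; elim: n => [|n IH] hk.
  move: hk; rewrite leqn0 => /eqP ->; rewrite big_nat1 !addr0; exact: sq_tele.
have hn : 0 <= n%:R :> R by rewrite ler0n.
case: (ltngtP k n.+1) hk => // [hlt|->] _.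
  rewrite big_nat_recr /=; last exact: ltnW.
  have := IH hlt.
  have := @sq_tele _ (b + n.+1%:R); rewrite -addn1 natrD.
  have -> : b + (n%:R + 1) - 1 = b + n%:R by ring.
  move=> h1 h2; have := h1 ltac:(lra); lra.
rewrite big_nat1; apply: sq_tele; rewrite -addn1 natrD; lra.
Qed.


Lemma one_sub_le (R : realType) (t x : R) : 0 <= t -> 0 < x ->
  1 - t / x <= (x / (x + 1)) `^ t.
Proof.
move=> ht hx.
have hx1 : 0 < x / (x + 1) by apply: divr_gt0 => //; rewrite addr_gt0.
rewrite /powR gt_eqF //.
apply: (@le_trans _ _ (expR (- (t / x)))); first exact: expR_ge1Dx.
rewrite ler_expR.
have hxp : 0 < x^-1 by rewrite invr_gt0.
have hxi : -1 < x^-1 by apply: lt_trans hxp; rewrite ltrN10.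
have hl := le_ln1Dx hxi.
have -> : x / (x + 1) = ((1 + x^-1))^-1.
  have -> : 1 + x^-1 = (x + 1) / x by rewrite mulrDl divff ?mul1r // lt0r_neq0.
  by rewrite invf_div.
rewrite lnV; last by rewrite posrE addr_gt0.
rewrite mulrN lerN2 mulrC [t / x]mulrC.
by apply: ler_wpM2r.
Qed.

Lemma posb (R : realFieldType) (b : R) (m : nat) : 1 < b -> 0 < b + m%:R /\ 0 < b + m%:R + 1 /\ 0 < b + m%:R - 1.
Proof. move=> hb; have : 0 <= m%:R :> R by rewrite ler0n. lra. Qed.

Lemma prod_bound (R : realType) (b t : R) (k n : nat) : 1 < b -> 0 <= t -> (k <= n)%N ->
  (forall i : nat, 0 <= 1 - t / (b + i%:R)) ->
  \prod_(k.+1 <= i < n.+1) (1 - t / (b + i%:R)) <= ((b + k%:R + 1) / (b + n%:R + 1)) `^ t.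
Proof.
move=> hb ht hkn hp.
have base : forall m : nat, \prod_(m.+1 <= i < m.+1) (1 - t / (b + i%:R))
    <= ((b + m%:R + 1) / (b + m%:R + 1)) `^ t.
  move=> m; rewrite big_geq // divff ?powR1 //.
  by apply: lt0r_neq0; have [? [? ?]] := @posb _ b m hb.
elim: n hkn => [|n IH] hk.
  by move: hk; rewrite leqn0 => /eqP ->; apply: base.
case: (ltngtP k n.+1) hk => // [hlt|->] _; last exact: base.
have hx : 0 < b + n.+1%:R.
  by have [? [? ?]] := @posb _ b n.+1 hb.
rewrite big_nat_recr /=; last exact: hlt.
apply: le_trans.
  apply: ler_pM; [ | exact: hp | exact: IH | exact: one_sub_le].
  by apply: prodr_ge0 => i _; apply: hp.
have hy : 0 < b + k%:R + 1.
  by have [? [? ?]] := @posb _ b k hb.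
have hz : 0 < b + n%:R + 1.
  by have [? [? ?]] := @posb _ b n hb.
rewrite -powRM; first last.
- by apply: divr_ge0; apply: ltW => //; apply: addr_gt0.
- by apply: divr_ge0; apply: ltW.
suff -> : (b + k%:R + 1) / (b + n%:R + 1) * ((b + n.+1%:R) / (b + n.+1%:R + 1))
   = (b + k%:R + 1) / (b + n.+1%:R + 1) by exact: lexx.
rewrite -addn1 natrD.
have -> : b + (n%:R + 1) = b + n%:R + 1 by ring.
field; apply/andP; split; apply: lt0r_neq0 => //; apply: addr_gt0 => //.
Qed.

Lemma sig_le (R : realType) (M N : nat) (A : 'M[R]_(M, N))
  (sigma : 'I_N -> R) (V : 'M[R]_N) (l : 'I_N) :
  V^T *m V = 1%:M ->
  A^T *m A = V *m diag_mx (\row_i (sigma i ^+ 2)) *m V^T ->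
  sigma l ^+ 2 <= M%:R * Ltilde A.
Proof.
move=> hV hA.
have e1 : \tr (A^T *m A) = \sum_(i < N) sigma i ^+ 2.
  rewrite hA mxtrace_mulC mulmxA hV mul1mx mxtrace_diag.
  by apply: eq_bigr => i _; rewrite mxE.
have e2 : \tr (A^T *m A) = \sum_(j < M) \sum_(i < N) A j i ^+ 2.
  rewrite /mxtrace exchange_big /=; apply: eq_bigr => i _.
  rewrite mxE; apply: eq_bigr => j _; by rewrite !mxE expr2.
have h1 : sigma l ^+ 2 <= \sum_(i < N) sigma i ^+ 2.
  rewrite (bigD1 l) //= lerDl; apply: sumr_ge0 => i _; exact: sqr_ge0.
have h2 : \sum_(j < M) \sum_(i < N) A j i ^+ 2 <= \sum_(j < M) Ltilde A.
  apply: ler_sum => j _; rewrite /Ltilde (bigD1 j) //= le_max lexx //.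
rewrite -e1 e2 in h1.
apply: le_trans h1 (le_trans h2 _).
by rewrite sumr_const card_ord mulr_natl.
Qed.

Lemma alpha_facts (R : realType) (al s m : R) :
  0 < al -> al * s ^+ 2 <= 1 / 2 -> 0 < m -> m <= s ->
  0 <= Afac s al <= pfac m al /\ 0 <= pfac m al <= 1.
Proof.
move=> ha hs hm hms; rewrite /Afac /pfac.
have h1 : m ^+ 2 <= s ^+ 2 by rewrite ler_sqr //; [apply: ltW | apply: ltW; apply: lt_le_trans hms].
have h2 : al * m ^+ 2 <= al * s ^+ 2 by apply: ler_wpM2l => //; apply: ltW.
have h3 : 0 <= al * m ^+ 2 by apply: mulr_ge0; [apply: ltW | apply: sqr_ge0].
split; apply/andP; split; lra.
Qed.

Lemma smin_facts (R : realType) (N : nat) (sigma : 'I_N -> R) (l : 'I_N) :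
  (forall i, 0 < sigma i) -> 0 < smin sigma /\ smin sigma <= sigma l /\ sigma l <= smax sigma.
Proof.
move=> hpos.
have hmax : sigma l <= smax sigma by rewrite /smax (bigD1 l) //= le_max lexx.
split; last split => //.
  rewrite /smin; apply: (big_ind (fun x => 0 < x)).
  - exact: lt_le_trans (hpos l) hmax.
  - by move=> x y hx hy; rewrite lt_min hx hy.
  - by move=> i _; apply: hpos.
by rewrite /smin (bigD1 l) //= ge_min lexx.
Qed.

Theorem lemma15 (R : realType) (M N : nat) (A : 'M[R]_(M, N))
  (sigma : 'I_N -> R) (V : 'M[R]_N) (l : 'I_N) (a b : R) :
  (N <= M)%N ->
  \rank A = N ->
  (forall i j : 'I_N, (i <= j)%N -> sigma j <= sigma i) ->
  (forall i, 0 < sigma i) ->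
  V^T *m V = 1%:M ->
  A^T *m A = V *m diag_mx (\row_i (sigma i ^+ 2)) *m V^T ->
  0 < a -> 1 < b ->
  a / b <= 1 / (2 * M%:R * Ltilde A) ->
  forall n k : nat, (k <= n)%N ->
  Bk (sigma l) M%:R (Ltilde A) (condA sigma) (smax sigma) (smin sigma)
     (fun i => a / (b + i%:R)) n k
  <= a ^+ 2 * M%:R * Ltilde A * condA sigma * smax sigma ^+ 2 / (b + k%:R - 1)
     * ((b + k%:R + 1) / (b + n%:R + 1)) `^ (a * smin sigma ^+ 2).
Proof.
move=> _ _ _ hpos hV hA ha hb hab n k hkn.
have hsl := @sig_le _ _ _ A sigma V l hV hA.
have [hm [hml hlmax]] := @smin_facts _ _ sigma l hpos.
set s := sigma l in hsl hml hlmax *.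
set m := smin sigma in hm hml *.
set L := Ltilde A in hsl hab *.
have hs : 0 < s by apply: hpos.
have hML : 0 < M%:R * L by apply: lt_le_trans hsl; apply: exprn_gt0.
have hal : forall i : nat, 0 < a / (b + i%:R) /\ a / (b + i%:R) * s ^+ 2 <= 1 / 2.
  move=> i; have [hbi _] := @posb _ b i hb.
  have hb0 : 0 < b by apply: lt_trans hb.
  split; first exact: divr_gt0.
  have e1 : a / (b + i%:R) <= a / b.
    apply: ler_wpM2l; first exact: ltW.
    by rewrite lef_pV2 ?posrE // lerDl ler0n.
  apply: le_trans (ler_wpM2r (sqr_ge0 s) (le_trans e1 hab)) _.
  have -> : 1 / (2 * M%:R * L) * s ^+ 2 = (s ^+ 2 / (M%:R * L)) / 2.
    have := lt0r_neq0 hML; rewrite mulf_eq0 negb_or => /andP [h1 h2].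
    by field; rewrite ?h1 ?h2.
  have : s ^+ 2 / (M%:R * L) <= 1 by rewrite ler_pdivrMr // mul1r.
  lra.
have hf : forall i : nat, 0 <= Afac s (a / (b + i%:R)) <= pfac m (a / (b + i%:R))
    /\ 0 <= pfac m (a / (b + i%:R)) <= 1.
  by move=> i; have [h1 h2] := hal i; apply: alpha_facts.
have hmono : forall i : nat, pfac m (a / (b + i%:R)) <= pfac m (a / (b + i.+1%:R)).
  move=> i; rewrite /pfac lerD2l lerN2; apply: ler_wpM2r; first exact: sqr_ge0.
  apply: ler_wpM2l; first exact: ltW.
  have [hbi _] := @posb _ b i hb; have [hbi' _] := @posb _ b i.+1 hb.
  by rewrite lef_pV2 ?posrE // lerD2l ler_nat.
set C := M%:R * L * condA sigma * smax sigma ^+ 2.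
have hC : 0 <= C.
  rewrite /C; apply: mulr_ge0; last exact: sqr_ge0.
  apply: mulr_ge0; first exact: ltW.
  by rewrite /condA; apply: divr_ge0; apply: sqr_ge0.
set Q := \prod_(k.+1 <= i < n.+1) pfac m (a / (b + i%:R)).
have hQ0 : 0 <= Q by apply: prodr_ge0 => i _; have [_ /andP [] ] := hf i.
set t := a * m ^+ 2.
have hQ : Q <= ((b + k%:R + 1) / (b + n%:R + 1)) `^ t.
  have -> : Q = \prod_(k.+1 <= i < n.+1) (1 - t / (b + i%:R)).
    by apply: eq_bigr => i _; rewrite /pfac /t mulrAC.
  apply: prod_bound => //; first by apply: mulr_ge0; [apply: ltW | apply: sqr_ge0].
  move=> i; have [_ /andP [h _]] := hf i; move: h; rewrite /pfac /t mulrAC //.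
have hterm : forall j, (k <= j < n.+1)%N ->
    (\prod_(j.+1 <= i < n.+1) Afac s (a / (b + i%:R))) * Bfac M%:R L (condA sigma) (smax sigma) (a / (b + j%:R))
    * (\prod_(k <= i < j) pfac m (a / (b + i%:R)))
    <= (C * a ^+ 2 * Q) * (1 / (b + j%:R) ^+ 2).
  move=> j /andP [hkj hjn].
  have -> : Bfac M%:R L (condA sigma) (smax sigma) (a / (b + j%:R)) = C * a ^+ 2 * (1 / (b + j%:R) ^+ 2).
    by rewrite /Bfac /C expr_div_n div1r; ring.
  set X := \prod_(j.+1 <= i < n.+1) _.
  set Z := \prod_(k <= i < j) _.
  set W := C * a ^+ 2 * (1 / (b + j%:R) ^+ 2).
  have -> : X * W * Z = W * (X * Z) by ring.
  have -> : C * a ^+ 2 * Q * (1 / (b + j%:R) ^+ 2) = W * Q by rewrite /W; ring.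
  have hW : 0 <= W.
    rewrite /W; apply: mulr_ge0; first by apply: mulr_ge0 => //; apply: sqr_ge0.
    by rewrite div1r invr_ge0; apply: sqr_ge0.
  apply: ler_wpM2l => //.
  have hX : X <= \prod_(j.+1 <= i < n.+1) pfac m (a / (b + i%:R)).
    by apply: ler_prod => i _; have [h _] := hf i.
  have hZ : Z <= \prod_(k.+1 <= i < j.+1) pfac m (a / (b + i%:R)).
    rewrite big_add1 /=; apply: ler_prod => i _.
    by have [_ /andP [h _]] := hf i; rewrite h /= hmono.
  have hQe : Q = (\prod_(k.+1 <= i < j.+1) pfac m (a / (b + i%:R))) * \prod_(j.+1 <= i < n.+1) pfac m (a / (b + i%:R)).
    by rewrite /Q (@big_cat_nat _ _ _ j.+1).
  rewrite hQe mulrC; apply: ler_pM => //.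
  - by apply: prodr_ge0 => i _; have [_ /andP [h _]] := hf i.
  - by apply: prodr_ge0 => i _; have [/andP [h _] _] := hf i.
rewrite /Bk /=.
apply: le_trans.
  rewrite big_nat_cond; apply: ler_sum => j; rewrite andbT => hj.
  exact: hterm.
rewrite -big_nat_cond -mulr_sumr.
have hsum := @sum_bound _ b k n hb hkn.
have [hbk _] := @posb _ b n hb.
have [_ [_ hbk1]] := @posb _ b k hb.
have hS : \sum_(k <= j < n.+1) 1 / (b + j%:R) ^+ 2 <= 1 / (b + k%:R - 1).
  apply: le_trans hsum _; rewrite lerBlDr lerDl div1r invr_ge0; exact: ltW.
have hCa : 0 <= C * a ^+ 2 by apply: mulr_ge0 => //; apply: sqr_ge0.
apply: le_trans (ler_wpM2l (mulr_ge0 hCa hQ0) hS) _.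
have -> : a ^+ 2 * M%:R * L * condA sigma * smax sigma ^+ 2 / (b + k%:R - 1)
   * ((b + k%:R + 1) / (b + n%:R + 1)) `^ t
   = C * a ^+ 2 * ((b + k%:R + 1) / (b + n%:R + 1)) `^ t * (1 / (b + k%:R - 1)).
  by rewrite /C div1r; ring.
apply: ler_wpM2r; first by rewrite div1r invr_ge0; exact: ltW.
exact: ler_wpM2l.
Qed.
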